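(* The category $\mathbf{ConvexRel}$ is a dagger compact closed category, where: (i) the symmetric monoidal structure has monoidal product $(A,\alpha)\otimes(B,\beta)$ (the convex algebra on $A\times B$ with mixing $\sum_i p_i|(a_i,b_i)\rangle\mapsto(\sum_i p_i a_i,\sum_i p_i b_i)$), acting on morphisms by the product of relations, and monoidal unit $I$ (the one-point set $\{*\}$ with its unique convex algebra structure); (ii) the dagger of a morphism $R:(A,\alpha)\to(B,\beta)$ is its relational converse $R^{\dagger}=\{(b,a)\mid (a,b)\in R\}:(B,\beta)\to(A,\alpha)$; (iii) for each object $(A,\alpha)$, the cap $\eta_{(A,\alpha)}:I\to(A,\alpha)\otimes(A,\alpha)$ is the relation $\{( *,(a,a))\mid a\in A\}$ and the cup $\epsilon_{(A,\alpha)}:(A,\alpha)\otimes(A,\alpha)\to I$ is its converse $\{((a,a),* )\mid a\in A\}$. Moreover, every object $(A,\alpha)$ carries a commutative special dagger Frobenius structure whose comultiplication (copy) is the relation $\{(a,(a,a))\mid a\in A\}:(A,\alpha)\to(A,\alpha)\otimes(A,\alpha)$ and whose counit (delete) is the relation $\{(a,* )\mid a\in A\}:(A,\alpha)\to I$, with multiplication and unit given by the converses (daggers) of these.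
   Context: For a set $X$, $D(X)$ denotes the set of finite formal convex sums $\sum_i p_i|x_i\rangle$ of elements $x_i\in X$, with $p_i\in\mathbb{R}^{\ge 0}$ and $\sum_i p_i=1$ (equivalently, finitely supported probability distributions on $X$). A convex algebra is a pair $(A,\alpha)$ with $A$ a set and $\alpha:D(A)\to A$ a function satisfying $\alpha(|a\rangle)=a$ for all $a\in A$ and $\alpha(\sum_{i,j}p_iq_{i,j}|a_{i,j}\rangle)=\alpha(\sum_i p_i|\alpha(\sum_j q_{i,j}|a_{i,j}\rangle)\rangle)$ for all finite families (where $\sum_i p_i=1$ and $\sum_j q_{i,j}=1$ for each $i$). One abbreviates $\sum_i p_i a_i:=\alpha(\sum_i p_i|a_i\rangle)$. A convex relation $(A,\alpha)\to(B,\beta)$ is a binary relation $R\subseteq A\times B$ such that whenever $R(a_i,b_i)$ holds for all $i$ in a finite family and $\sum_i p_i|\cdot\rangle$ is any formal convex combination, then $R(\sum_i p_i a_i,\sum_i p_i b_i)$ holds. The category $\mathbf{ConvexRel}$ has convex algebras as objects and convex relations as morphisms, with composition and identities as for ordinary binary relations. A Frobenius structure on an object is a comonoid (comultiplication, counit) and monoid (multiplication, unit) satisfying the Frobenius law; it is dagger if the monoid is the dagger of the comonoid, special if multiplication after comultiplication is the identity, and commutative if the monoid and comonoid are (co)commutative with respect to the symmetry. *)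

(* Defs.v *)
From HB Require Import structures.
From mathcomp Require Import all_boot all_order all_algebra.
From mathcomp Require Import boolp finmap.
From mathcomp Require Import Rstruct.
From Stdlib Require Import Rdefinitions.

Set Implicit Arguments.
Unset Strict Implicit.
Unset Printing Implicit Defensive.
Import Order.TTheory GRing.Theory Num.Theory.
Local Open Scope ring_scope.
Local Open Scope fset_scope.

Notation Real := Rdefinitions.R.

Section Dist.
Variable T : Type.
Local Notation cT := {classic T}.

Definition is_dist (f : {fsfun cT -> Real with 0}) : bool :=
  [forall x : finsupp f, 0 <= f (val x)] && (\sum_(x <- finsupp f) f x == 1).

Definition dist := {f : {fsfun cT -> Real with 0} | is_dist f}.

Definition is_weights (I : finType) (p : I -> Real) : Prop :=
  (forall i, 0 <= p i) /\ \sum_i p i = 1.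

Definition fsum_fsfun (I : finType) (p : I -> Real) (a : I -> T)
  : {fsfun cT -> Real with 0} :=
  [fsfun y in [fset (a i : cT) | i : I] => \sum_(i | (a i : cT) == y) p i | 0].

Lemma fsum_fsfunE (I : finType) (p : I -> Real) (a : I -> T) (y : cT) :
  fsum_fsfun p a y = \sum_(i | (a i : cT) == y) p i.
Proof.
rewrite /fsum_fsfun fsfun_fun; case: ifP => // yNS.
rewrite big1 // => i /eqP ai; move: yNS; rewrite -ai.
by move/negbT/negP; apply: absurd; apply/imfsetP; exists i.
Qed.

Lemma fsum_is_dist (I : finType) (p : I -> Real) (Hp : is_weights p)
  (a : I -> T) : is_dist (fsum_fsfun p a).
Proof.
case: Hp => p0 p1; apply/andP; split.
  by apply/forallP => x; rewrite fsum_fsfunE sumr_ge0.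
set S := [fset (a i : cT) | i : I].
have sub : finsupp (fsum_fsfun p a) `<=` S.
  apply/fsubsetP => x; rewrite mem_finsupp fsum_fsfunE.
  apply: contraR => xS; rewrite big1 // => i /eqP ai.
  by move: xS; rewrite -ai; case/negP; apply/imfsetP; exists i.
have -> : \sum_(x <- finsupp (fsum_fsfun p a)) fsum_fsfun p a x
          = \sum_(x <- S) fsum_fsfun p a x.
  apply: big_fset_incl => // x _.
  by rewrite mem_finsupp negbK => /eqP.
rewrite (eq_bigr _ (fun x _ => fsum_fsfunE p a x)).
rewrite big_seq_fsetE /=; under eq_bigr do rewrite big_mkcond.
rewrite exchange_big /= -p1; apply/eqP; apply: eq_bigr => i _.
rewrite -big_mkcond /=.
have Hin : (a i : cT) \in S by apply/imfsetP; exists i.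
by rewrite (big_pred1 [` Hin]).
Qed.

(** the formal convex sum  \sum_i p_i |a_i>  of a finite family *)
Definition fsum (I : finType) (p : I -> Real) (Hp : is_weights p) (a : I -> T)
  : dist := exist _ (fsum_fsfun p a) (fsum_is_dist Hp a).

Lemma weights1 : is_weights (fun _ : unit => 1).
Proof. split; first by move=> _; exact: ler01. by rewrite big_const card_unit /= addr0. Qed.

Definition dirac (a : T) : dist := fsum weights1 (fun _ : unit => a).

Lemma weights_flatten (I : finType) (J : I -> finType) (p : I -> Real)
  (q : forall i, J i -> Real) (Hp : is_weights p)
  (Hq : forall i, is_weights (q i)) :
  is_weights (fun k : {i : I & J i} => p (tag k) * q (tag k) (tagged k)).
Proof.
case: Hp => p0 p1; split.
  by move=> [i j]; rewrite mulr_ge0 //; case: (Hq i).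
rewrite -(@sig_big_dep _ _ _ I J xpredT (fun _ _ => true) (fun i j => p i * q i j)) /=.
rewrite -p1; apply: eq_bigr => i _; rewrite -mulr_sumr.
by case: (Hq i) => _ ->; rewrite mulr1.
Qed.

(** any distribution d is the formal sum over its support of d(x)|x> *)
Lemma dist_weights (d : dist) :
  is_weights (fun k : finsupp (val d) => val d (val k)).
Proof.
case: d => f /= /andP [/forallP f0 /eqP f1]; split => // .
by rewrite -f1 big_seq_fsetE.
Qed.
End Dist.

Definition conv_alg (A : Type) (alpha : dist A -> A) : Prop :=
  (forall a : A, alpha (dirac a) = a) /\
  (forall (I : finType) (J : I -> finType) (p : I -> Real)
     (q : forall i, J i -> Real) (Hp : is_weights p)
     (Hq : forall i, is_weights (q i)) (a : forall i, J i -> A),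
     alpha (fsum (weights_flatten Hp Hq) (fun k => a (tag k) (tagged k)))
     = alpha (fsum Hp (fun i => alpha (fsum (Hq i) (a i))))).

Record calg := CAlg { car :> Type; act : dist car -> car }.

Definition is_calg (A : calg) : Prop := conv_alg (@act A).

Definition rel (A B : calg) := car A -> car B -> Prop.

Definition convex_rel (A B : calg) (Rl : rel A B) : Prop :=
  forall (I : finType) (p : I -> Real) (Hp : is_weights p)
         (a : I -> car A) (b : I -> car B),
    (forall i, Rl (a i) (b i)) ->
    Rl (act (fsum Hp a)) (act (fsum Hp b)).

Definition req (A B : calg) (Rl S : rel A B) : Prop :=
  forall a b, Rl a b <-> S a b.

(** identity and (diagrammatic) composition: [rcomp Rl S] is "first Rl, then S" *)
Definition rid (A : calg) : rel A A := fun a a' => a = a'.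
Definition rcomp (A B C : calg) (Rl : rel A B) (S : rel B C) : rel A C :=
  fun a c => exists b, Rl a b /\ S b c.

Definition rconv (A B : calg) (Rl : rel A B) : rel B A := fun b a => Rl a b.

Definition cI : calg := @CAlg unit (fun _ => tt).

(** monoidal product of objects:
    sum_i p_i |(a_i,b_i)>  |->  (sum_i p_i a_i, sum_i p_i b_i),
    where the distribution d on A x B is written canonically as the formal sum
    over its support  sum_{x in supp d} d(x) |x>. *)
Definition prod_act (A B : calg) (d : dist (car A * car B)) : car A * car B :=
  (act (fsum (dist_weights d) (fun k => (val k : car A * car B).1)),
   act (fsum (dist_weights d) (fun k => (val k : car A * car B).2))).

Definition ctens (A B : calg) : calg := @CAlg (car A * car B) (@prod_act A B).

Definition rtens (A B C D : calg) (Rl : rel A B) (S : rel C D)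
  : rel (ctens A C) (ctens B D) :=
  fun x y => Rl x.1 y.1 /\ S x.2 y.2.

Definition rassoc (A B C : calg) : rel (ctens (ctens A B) C) (ctens A (ctens B C)) :=
  fun x y => y = (x.1.1, (x.1.2, x.2)).
Definition rlunit (A : calg) : rel (ctens cI A) A := fun x y => y = x.2.
Definition rrunit (A : calg) : rel (ctens A cI) A := fun x y => y = x.1.
Definition rsym (A B : calg) : rel (ctens A B) (ctens B A) :=
  fun x y => y = (x.2, x.1).

Definition rcap (A : calg) : rel cI (ctens A A) := fun _ y => y.1 = y.2.
Definition rcup (A : calg) : rel (ctens A A) cI := rconv (@rcap A).

Definition rcopy (A : calg) : rel A (ctens A A) := fun a y => y = (a, a).
Definition rdelete (A : calg) : rel A cI := fun _ _ => True.
Definition rmerge (A : calg) : rel (ctens A A) A := rconv (@rcopy A).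
Definition rnew (A : calg) : rel cI A := rconv (@rdelete A).

Definition riso (A B : calg) (Rl : rel A B) (S : rel B A) : Prop :=
  req (rcomp Rl S) (@rid A) /\ req (rcomp S Rl) (@rid B).

Definition unitary (A B : calg) (Rl : rel A B) : Prop := riso Rl (rconv Rl).

Definition ConvexRel_category : Prop :=
  (forall A : calg, is_calg A -> convex_rel (@rid A)) /\
  (forall (A B C : calg) (Rl : rel A B) (S : rel B C),
     is_calg A -> is_calg B -> is_calg C ->
     convex_rel Rl -> convex_rel S -> convex_rel (rcomp Rl S)) /\
  (forall (A B : calg) (Rl : rel A B), is_calg A -> is_calg B -> convex_rel Rl ->
     req (rcomp (@rid A) Rl) Rl /\ req (rcomp Rl (@rid B)) Rl) /\
  (forall (A B C D : calg) (Rl : rel A B) (S : rel B C) (T : rel C D),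
     is_calg A -> is_calg B -> is_calg C -> is_calg D ->
     convex_rel Rl -> convex_rel S -> convex_rel T ->
     req (rcomp (rcomp Rl S) T) (rcomp Rl (rcomp S T))).

Definition ConvexRel_symmetric_monoidal : Prop :=
  is_calg cI /\
  (forall A B : calg, is_calg A -> is_calg B -> is_calg (ctens A B)) /\
  (forall (A B C D : calg) (Rl : rel A B) (S : rel C D),
     is_calg A -> is_calg B -> is_calg C -> is_calg D ->
     convex_rel Rl -> convex_rel S -> convex_rel (rtens Rl S)) /\
  (forall A B : calg, is_calg A -> is_calg B ->
     req (rtens (@rid A) (@rid B)) (@rid (ctens A B))) /\
  (forall (A1 B1 C1 A2 B2 C2 : calg) (R1 : rel A1 B1) (S1 : rel B1 C1)
          (R2 : rel A2 B2) (S2 : rel B2 C2),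
     is_calg A1 -> is_calg B1 -> is_calg C1 ->
     is_calg A2 -> is_calg B2 -> is_calg C2 ->
     convex_rel R1 -> convex_rel S1 -> convex_rel R2 -> convex_rel S2 ->
     req (rtens (rcomp R1 S1) (rcomp R2 S2)) (rcomp (rtens R1 R2) (rtens S1 S2))) /\
  (forall A B C : calg, is_calg A -> is_calg B -> is_calg C ->
     convex_rel (@rassoc A B C) /\ riso (@rassoc A B C) (rconv (@rassoc A B C))) /\
  (forall A : calg, is_calg A ->
     convex_rel (@rlunit A) /\ riso (@rlunit A) (rconv (@rlunit A)) /\
     convex_rel (@rrunit A) /\ riso (@rrunit A) (rconv (@rrunit A))) /\
  (forall A B : calg, is_calg A -> is_calg B ->
     convex_rel (@rsym A B) /\ riso (@rsym A B) (@rsym B A)) /\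
  (forall (A A' B B' C C' : calg) (Rl : rel A A') (S : rel B B') (T : rel C C'),
     is_calg A -> is_calg A' -> is_calg B -> is_calg B' -> is_calg C -> is_calg C' ->
     convex_rel Rl -> convex_rel S -> convex_rel T ->
     req (rcomp (rtens (rtens Rl S) T) (@rassoc A' B' C'))
         (rcomp (@rassoc A B C) (rtens Rl (rtens S T)))) /\
  (forall (A A' : calg) (Rl : rel A A'),
     is_calg A -> is_calg A' -> convex_rel Rl ->
     req (rcomp (rtens (@rid cI) Rl) (@rlunit A')) (rcomp (@rlunit A) Rl) /\
     req (rcomp (rtens Rl (@rid cI)) (@rrunit A')) (rcomp (@rrunit A) Rl)) /\
  (forall (A A' B B' : calg) (Rl : rel A A') (S : rel B B'),
     is_calg A -> is_calg A' -> is_calg B -> is_calg B' ->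
     convex_rel Rl -> convex_rel S ->
     req (rcomp (rtens Rl S) (@rsym A' B')) (rcomp (@rsym A B) (rtens S Rl))) /\
  (forall A B C D : calg, is_calg A -> is_calg B -> is_calg C -> is_calg D ->
     req (rcomp (@rassoc (ctens A B) C D) (@rassoc A B (ctens C D)))
         (rcomp (rcomp (rtens (@rassoc A B C) (@rid D)) (@rassoc A (ctens B C) D))
                (rtens (@rid A) (@rassoc B C D)))) /\
  (forall A B : calg, is_calg A -> is_calg B ->
     req (rcomp (@rassoc A cI B) (rtens (@rid A) (@rlunit B)))
         (rtens (@rrunit A) (@rid B))) /\
  (forall A B C : calg, is_calg A -> is_calg B -> is_calg C ->
     req (rcomp (rcomp (@rassoc A B C) (@rsym A (ctens B C))) (@rassoc B C A))
         (rcomp (rcomp (rtens (@rsym A B) (@rid C)) (@rassoc B A C))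
                (rtens (@rid B) (@rsym A C)))) /\
  (forall A B : calg, is_calg A -> is_calg B ->
     req (rcomp (@rsym A B) (@rsym B A)) (@rid (ctens A B))).

Definition ConvexRel_dagger_symmetric_monoidal : Prop :=
  (forall (A B : calg) (Rl : rel A B), is_calg A -> is_calg B ->
     convex_rel Rl -> convex_rel (rconv Rl)) /\
  (forall A : calg, is_calg A -> req (rconv (@rid A)) (@rid A)) /\
  (forall (A B C : calg) (Rl : rel A B) (S : rel B C),
     is_calg A -> is_calg B -> is_calg C -> convex_rel Rl -> convex_rel S ->
     req (rconv (rcomp Rl S)) (rcomp (rconv S) (rconv Rl))) /\
  (forall (A B : calg) (Rl : rel A B), is_calg A -> is_calg B -> convex_rel Rl ->
     req (rconv (rconv Rl)) Rl) /\
  (forall (A B C D : calg) (Rl : rel A B) (S : rel C D),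
     is_calg A -> is_calg B -> is_calg C -> is_calg D ->
     convex_rel Rl -> convex_rel S ->
     req (rconv (rtens Rl S)) (rtens (rconv Rl) (rconv S))) /\
  (forall A B C : calg, is_calg A -> is_calg B -> is_calg C ->
     unitary (@rassoc A B C)) /\
  (forall A : calg, is_calg A -> unitary (@rlunit A) /\ unitary (@rrunit A)) /\
  (forall A B : calg, is_calg A -> is_calg B -> unitary (@rsym A B)).

Definition ConvexRel_dagger_compact_closed : Prop :=
  ConvexRel_category /\ ConvexRel_symmetric_monoidal /\
  ConvexRel_dagger_symmetric_monoidal /\
  (forall A : calg, is_calg A ->
     convex_rel (@rcap A) /\ convex_rel (@rcup A) /\
     req (@rcup A) (rconv (@rcap A)) /\
     req (rcomp (rconv (@rlunit A))
          (rcomp (rtens (@rcap A) (@rid A))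
          (rcomp (@rassoc A A A)
          (rcomp (rtens (@rid A) (@rcup A)) (@rrunit A))))) (@rid A) /\
     req (rcomp (rconv (@rrunit A))
          (rcomp (rtens (@rid A) (@rcap A))
          (rcomp (rconv (@rassoc A A A))
          (rcomp (rtens (@rcup A) (@rid A)) (@rlunit A))))) (@rid A) /\
     req (rcomp (@rcap A) (@rsym A A)) (@rcap A)).

Definition ConvexRel_Frobenius : Prop :=
  forall A : calg, is_calg A ->
    let d := @rcopy A in let e := @rdelete A in
    let m := @rmerge A in let u := @rnew A in
    convex_rel d /\ convex_rel e /\ convex_rel m /\ convex_rel u /\
    req m (rconv d) /\ req u (rconv e) /\
    req (rcomp d (rcomp (rtens d (@rid A)) (@rassoc A A A)))
        (rcomp d (rtens (@rid A) d)) /\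
    req (rcomp d (rcomp (rtens e (@rid A)) (@rlunit A))) (@rid A) /\
    req (rcomp d (rcomp (rtens (@rid A) e) (@rrunit A))) (@rid A) /\
    req (rcomp (rtens m (@rid A)) m)
        (rcomp (@rassoc A A A) (rcomp (rtens (@rid A) m) m)) /\
    req (rcomp (rconv (@rlunit A)) (rcomp (rtens u (@rid A)) m)) (@rid A) /\
    req (rcomp (rconv (@rrunit A)) (rcomp (rtens (@rid A) u) m)) (@rid A) /\
    req (rcomp d (@rsym A A)) d /\
    req (rcomp (@rsym A A) m) m /\
    req (rcomp (rtens d (@rid A)) (rcomp (@rassoc A A A) (rtens (@rid A) m)))
        (rcomp m d) /\
    req (rcomp (rtens (@rid A) d) (rcomp (rconv (@rassoc A A A)) (rtens m (@rid A))))
        (rcomp m d) /\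
    req (rcomp d m) (@rid A).

(* Main.v *)
Require Import Defs.
From HB Require Import structures.
From mathcomp Require Import all_boot all_order all_algebra.
From mathcomp Require Import boolp finmap Rstruct.
Set Implicit Arguments.
Unset Strict Implicit.
Unset Printing Implicit Defensive.
Import Order.TTheory GRing.Theory Num.Theory.
Local Open Scope ring_scope.
Local Open Scope fset_scope.

Lemma dist_eq (T : Type) (d1 d2 : dist T) :
  (forall x, val d1 x = val d2 x) -> d1 = d2.
Proof. by move=> H; apply/val_inj/fsfunP. Qed.

Lemma fsum_map (T U : Type) (I : finType) (p : I -> Real) (Hp : is_weights p)
  (a : I -> T) (g : T -> U) :
  fsum (dist_weights (fsum Hp a)) (fun k => g (val k)) = fsum Hp (fun i => g (a i)).
Proof.
apply: dist_eq => y /=; rewrite !fsum_fsfunE.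
case: Hp => p0 p1.
set S := [fset (a i : {classic T}) | i : I].
have sub : finsupp (fsum_fsfun p a) `<=` S.
  apply/fsubsetP => x; rewrite mem_finsupp fsum_fsfunE.
  apply: contraR => xS. rewrite big1 // => i /eqP ai.
  by move: xS; rewrite -ai; case/negP; apply/imfsetP; exists i.
rewrite -(big_seq_fsetE _ (finsupp (fsum_fsfun p a))
   (fun x : {classic T} => (g x : {classic U}) == y) (fun x => fsum_fsfun p a x)).
rewrite big_mkcond /=.
rewrite (big_fset_incl _ sub); last first.
  by move=> x _; rewrite mem_finsupp negbK => /eqP ->; rewrite if_same.
rewrite big_seq_fsetE /=.
under eq_bigr do rewrite fsum_fsfunE.
under eq_bigr do rewrite big_mkcond.
rewrite (eq_bigr (fun x : S => \sum_i (if (a i : {classic T}) == val x then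
     (if (g (val x) : {classic U}) == y then p i else 0) else 0))); last first.
  move=> x _; case: ifP => _; last by rewrite big1 // => i _; rewrite if_same.
  by apply: eq_bigr => i _; case: ifP.
rewrite exchange_big /= [RHS]big_mkcond /=; apply: eq_bigr => i _.
have Hin : (a i : {classic T}) \in S by apply/imfsetP; exists i.
rewrite -big_mkcond /= (big_pred1 [` Hin]) /=; last first.
  by move=> x; rewrite /= -val_eqE /= eq_sym.
by [].
Qed.

Lemma prod_actE (A B : calg) (I : finType) (p : I -> Real) (Hp : is_weights p)
  (x : I -> car A * car B) :
  @act (ctens A B) (fsum Hp x) =
  (@act A (fsum Hp (fun i => (x i).1)), @act B (fsum Hp (fun i => (x i).2))).
Proof.
rewrite /= /prod_act; congr pair; congr act.
  exact: (fsum_map Hp x fst).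
exact: (fsum_map Hp x snd).
Qed.

Ltac unf := unfold rcup, rmerge, rnew, unitary, riso, req, rcomp, rtens, rid, rconv, rassoc, rlunit, rrunit, rsym,
  rcap, rcup, rcopy, rdelete, rmerge, rnew, riso, unitary in *.

Ltac des := repeat (match goal with
 | H : exists _, _ |- _ => destruct H
 | H : _ /\ _ |- _ => destruct H
 | H : True |- _ => clear H
 | x : ?T |- _ => let T' := eval hnf in T in
     match T' with prod _ _ => destruct x | unit => destruct x end
 | H : (_,_) = (_,_) |- _ => injection H; clear H; intros
 | H : ?a = ?b |- _ => (subst a || subst b)
 end; simpl in * ).

Lemma ex_prod (X Y : Type) (P : X * Y -> Prop) : (exists a b, P (a, b)) -> exists x, P x.
Proof. by move=> [a [b H]]; exists (a, b). Qed.
Lemma ex_unit (P : unit -> Prop) : P tt -> exists x, P x.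
Proof. by exists tt. Qed.

Ltac fin := repeat (first [ apply ex_prod | apply ex_unit | eexists | split ]); simpl in *; try done; eauto.

Ltac rsolve := unf; intros; des; try (split; intros; des; fin).

Lemma conv_rid (A : calg) : convex_rel (@rid A).
Proof. by move=> I p Hp a b H; rewrite /rid (funext H). Qed.

Lemma conv_rcomp (A B C : calg) (Rl : Defs.rel A B) (S : Defs.rel B C) :
  convex_rel Rl -> convex_rel S -> convex_rel (rcomp Rl S).
Proof.
move=> HR HS I p Hp a c H.
have [f Hf] := choice H.
exists (act (fsum Hp f)); split.
  by apply: HR => i; case: (Hf i).
by apply: HS => i; case: (Hf i).
Qed.

Lemma conv_rconv (A B : calg) (Rl : Defs.rel A B) : convex_rel Rl -> convex_rel (rconv Rl).
Proof. by move=> HR I p Hp a b H; apply: HR. Qed.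

Lemma conv_rtens (A B C D : calg) (Rl : Defs.rel A B) (S : Defs.rel C D) :
  convex_rel Rl -> convex_rel S -> convex_rel (rtens Rl S).
Proof.
move=> HR HS I p Hp a b H; rewrite /rtens !prod_actE /=; split.
  by apply: HR => i; case: (H i).
by apply: HS => i; case: (H i).
Qed.

Lemma conv_rassoc (A B C : calg) : convex_rel (@rassoc A B C).
Proof. by move=> I p Hp a b H; rewrite /rassoc (funext H) !prod_actE. Qed.

Lemma conv_rassoc' (A B C : calg) : convex_rel (rconv (@rassoc A B C)).
Proof. apply: conv_rconv; exact: conv_rassoc. Qed.

Lemma conv_rlunit (A : calg) : convex_rel (@rlunit A).
Proof. by move=> I p Hp a b H; rewrite /rlunit (funext H) !prod_actE. Qed.

Lemma conv_rrunit (A : calg) : convex_rel (@rrunit A).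
Proof. by move=> I p Hp a b H; rewrite /rrunit (funext H) !prod_actE. Qed.

Lemma conv_rsym (A B : calg) : convex_rel (@rsym A B).
Proof. by move=> I p Hp a b H; rewrite /rsym (funext H) !prod_actE. Qed.

Lemma conv_rcap (A : calg) : convex_rel (@rcap A).
Proof.
move=> I p Hp a b H; rewrite /rcap !prod_actE /=.
by congr act; congr fsum; apply: funext => i; apply: H.
Qed.

Lemma conv_rcopy (A : calg) : convex_rel (@rcopy A).
Proof. by move=> I p Hp a b H; rewrite /rcopy (funext H) !prod_actE. Qed.

Lemma conv_rdelete (A : calg) : convex_rel (@rdelete A).
Proof. by []. Qed.

Lemma calg_cI : is_calg cI.
Proof. by split => [[]|]. Qed.

Lemma calg_tens (A B : calg) : is_calg A -> is_calg B -> is_calg (ctens A B).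
Proof.
move=> [HA1 HA2] [HB1 HB2]; split.
  move=> [a b]; rewrite /dirac prod_actE /=.
  by rewrite -[X in _ = (X, _)]HA1 -[X in _ = (_, X)]HB1.
move=> I J p q Hp Hq x.
rewrite !prod_actE /= (HA2 _ _ _ _ Hp Hq (fun i j => (x i j).1)) (HB2 _ _ _ _ Hp Hq (fun i j => (x i j).2)); congr pair; congr act; congr fsum;
  apply: funext => i; [ by rewrite (fsum_map (Hq i) (x i) fst) | by rewrite (fsum_map (Hq i) (x i) snd) ].
Qed.
Lemma cat_ok : ConvexRel_category.
Proof.
split; [|split; [|split]].
- move=> A _; exact: conv_rid.
- move=> A B C Rl S _ _ _; exact: conv_rcomp.
- intros; split; rsolve.
- intros; rsolve.
Qed.

Lemma smc_ok : ConvexRel_symmetric_monoidal.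
Proof.
split; [exact: calg_cI|].
split; [exact: calg_tens|].
split; [intros; exact: conv_rtens|].
split; [intros; rsolve|].
split; [intros; rsolve|].
split; [intros; split; [exact: conv_rassoc| split; rsolve]|].
split; [intros; split; [exact: conv_rlunit| split; [split; rsolve|split; [exact: conv_rrunit|split; rsolve]]]|].
split; [intros; split; [exact: conv_rsym| split; rsolve]|].
split; [intros; rsolve|].
split; [intros; split; rsolve|].
split; [intros; rsolve|].
split; [intros; rsolve|].
split; [intros; rsolve|].
split; [intros; rsolve|].
intros; rsolve.
Qed.

Lemma dsmc_ok : ConvexRel_dagger_symmetric_monoidal.
Proof.
split; [intros; exact: conv_rconv|].
split; [intros; rsolve|].
split; [intros; rsolve|].
split; [intros; rsolve|].
split; [intros; rsolve|].
split; [intros; split; rsolve|].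
split; [intros; split; split; rsolve|].
intros; split; rsolve.
Qed.

Lemma dcc_ok : ConvexRel_dagger_compact_closed.
Proof.
split; [exact: cat_ok|].
split; [exact: smc_ok|].
split; [exact: dsmc_ok|].
move=> A HA.
split; [exact: conv_rcap|].
split; [apply: conv_rconv; exact: conv_rcap|].
split; [rsolve|].
split; [rsolve|].
split; [rsolve|].
rsolve.
Qed.

Lemma frob_ok : ConvexRel_Frobenius.
Proof.
move=> A HA /=.
split; [exact: conv_rcopy|].
split; [exact: conv_rdelete|].
split; [apply: conv_rconv; exact: conv_rcopy|].
split; [apply: conv_rconv; exact: conv_rdelete|].
do 12 (split; [rsolve|]).
rsolve.
Qed.

Theorem theorem1 : ConvexRel_dagger_compact_closed /\ ConvexRel_Frobenius.
Proof. split; [exact: dcc_ok | exact: frob_ok]. Qed.
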